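(* Let $D$ and $H$ be finite sets of doctors and hospitals with $|D|\ge 2$, $|H|\ge 2$, and let $P$ be a profile with common preferences. For positive integers $l,k$, the homogeneous arrangement $(l,k)$ is adequate at $P$ if and only if $l=k$ or $l,k\ge\min\{|D|,|H|\}$.
   Context: Each $h\in H$ has a strict preference $P_h$ over $D\cup\{h\}$ and each $d\in D$ a strict preference $P_d$ over $H\cup\{d\}$ (ranking below oneself means unacceptable). $P$ has common preferences if all doctors rank the hospitals identically, all hospitals rank the doctors identically, every hospital is acceptable to every doctor and every doctor is acceptable to every hospital. A matching is $\mu:H\cup D\to H\cup D$ with $\mu(h)\in D\cup\{h\}$, $\mu(d)\in H\cup\{d\}$, $\mu(d)=h$ iff $\mu(h)=d$; it is stable if no pair $(d,h)$ has $h\mathrel{P_d}\mu(d)$ and $d\mathrel{P_h}\mu(h)$. An interview arrangement $(\iota,\kappa)$ gives each hospital an interview capacity $\iota_h\in\mathbb N$ and each doctor $\kappa_d\in\mathbb N$; the homogeneous arrangement $(l,k)$ has $\iota_h=l$ for all $h$ and $\kappa_d=k$ for all $d$. An interview matching is a many-to-many matching $\nu$ ($\nu(d)\subseteq H$, $\nu(h)\subseteq D$, $h\in\nu(d)$ iff $d\in\nu(h)$) respecting the capacities. The $(\iota,\kappa)$-matching at $P$: Step 1, $\nu$ is the hospital-optimal pairwise stable interview matching, computed by hospital-proposing deferred acceptance where each agent chooses from a set of proposals its acceptable partners if at most capacity many, else its capacity-many best; Step 2, the final matching is the outcome of doctor-proposing deferred acceptance with each agent $i$'s preference restricted to $\nu(i)$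 (only interviewed, acceptable agents are acceptable, ranked by $P_i$). The arrangement is adequate at $P$ if the resulting matching is stable with respect to $P$. *)

(* Defs.v *)
From mathcomp Require Import all_boot.
Set Implicit Arguments. Unset Strict Implicit. Unset Printing Implicit Defensive.

(* A strict preference of agent i over (other side) ∪ {i} is encoded by an
   injective ranking r : option X -> nat (smaller = better), where [None]
   stands for i itself.  x is acceptable iff r (Some x) < r None. *)
Record profile (D H : finType) := Profile {
  pd : D -> option H -> nat;
  ph : H -> option D -> nat;
  pd_inj : forall d, injective (pd d);
  ph_inj : forall h, injective (ph h) }.

Definition common_prefs (D H : finType) (P : profile D H) : Prop :=
  [/\ (forall d d' h1 h2,
         (pd P d (Some h1) < pd P d (Some h2)) = (pd P d' (Some h1) < pd P d' (Some h2))),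
      (forall h h' d1 d2,
         (ph P h (Some d1) < ph P h (Some d2)) = (ph P h' (Some d1) < ph P h' (Some d2))),
      (forall d h, pd P d (Some h) < pd P d None) &
      (forall d h, ph P h (Some d) < ph P h None)].

Definition choose (T : finType) (r : T -> nat) (acc : pred T) (cap : nat)
  (S : {set T}) : {set T} :=
  [set x in S | acc x && (#|[set y in S | acc y && (r y < r x)]| < cap)].

Section DA.
Variables (A B : finType).
Variables (rA : A -> B -> nat) (accA : A -> pred B) (capA : A -> nat).
Variables (rB : B -> A -> nat) (accB : B -> pred A) (capB : B -> nat).

(* R : set of pairs (a,b) such that b has rejected a. *)
Definition da_proposals (R : {set A * B}) (a : A) : {set B} :=
  choose (rA a) (accA a) (capA a) [set b | (a, b) \notin R].
Definition da_received (R : {set A * B}) (b : B) : {set A} :=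
  [set a | b \in da_proposals R a].
Definition da_held (R : {set A * B}) (b : B) : {set A} :=
  choose (rB b) (accB b) (capB b) (da_received R b).
Definition da_step (R : {set A * B}) : {set A * B} :=
  R :|: [set p | (p.2 \in da_proposals R p.1) && (p.1 \notin da_held R p.2)].
(* rejections only accumulate, so #|A|*#|B| rounds reach the fixed point *)
Definition da_rejections : {set A * B} := iter (#|A| * #|B|) da_step set0.
Definition DA : {set A * B} := [set p | p.1 \in da_held da_rejections p.2].
End DA.

Section Interview.
Variables (D H : finType) (P : profile D H).

Definition accD (d : D) (h : H) : bool := pd P d (Some h) < pd P d None.
Definition accH (h : H) (d : D) : bool := ph P h (Some d) < ph P h None.

Definition interview_matching (iota : H -> nat) (kappa : D -> nat) : {set H * D} :=
  DA (fun h d => ph P h (Some d)) accH iota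
     (fun d h => pd P d (Some h)) accD kappa.

Definition final_matching (iota : H -> nat) (kappa : D -> nat) : {set D * H} :=
  let nu := interview_matching iota kappa in
  DA (fun d h => pd P d (Some h)) (fun d h => ((h, d) \in nu) && accD d h) (fun _ => 1)
     (fun h d => ph P h (Some d)) (fun h d => ((h, d) \in nu) && accH h d) (fun _ => 1).

(* mu(d), mu(h) (None = matched to oneself). *)
Definition partnerD (mu : {set D * H}) (d : D) : option H := [pick h | (d, h) \in mu].
Definition partnerH (mu : {set D * H}) (h : H) : option D := [pick d | (d, h) \in mu].

Definition stable (mu : {set D * H}) : Prop :=
  forall d h, ~ ((pd P d (Some h) < pd P d (partnerD mu d)) /\
                 (ph P h (Some d) < ph P h (partnerH mu h))).

Definition adequate (iota : H -> nat) (kappa : D -> nat) : Prop :=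
  stable (final_matching iota kappa).

Definition homogeneous_adequate (l k : nat) : Prop :=
  adequate (fun _ => l) (fun _ => k).
End Interview.

(* Main.v *)
Require Import Defs.
From mathcomp Require Import all_boot.
Set Implicit Arguments. Unset Strict Implicit. Unset Printing Implicit Defensive.

Lemma card_count (T : finType) (A : pred T) : #|A| = count A (enum T).
Proof. rewrite cardE /enum_mem size_filter /= count_filter; apply: eq_count => x.
by rewrite /= andbT. Qed.

Section Choose.
Variables (T : finType) (r : T -> nat) (acc : pred T) (cap : nat).

Lemma chooseE (S : {set T}) x : (x \in Defs.choose r acc cap S) =
  [&& x \in S, acc x & #|[set y in S | acc y && (r y < r x)]| < cap].
Proof. by rewrite inE. Qed.

Lemma choose_sub (S : {set T}) : Defs.choose r acc cap S \subset S.
Proof. by apply/subsetP => x; rewrite chooseE => /and3P []. Qed.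

Lemma choose_acc (S : {set T}) x : x \in Defs.choose r acc cap S -> acc x.
Proof. by rewrite chooseE => /and3P []. Qed.

Lemma choose_anti (S S' : {set T}) x : S' \subset S -> x \in S' ->
  x \in Defs.choose r acc cap S -> x \in Defs.choose r acc cap S'.
Proof.
move=> sub xS'; rewrite !chooseE xS' => /and3P [_ -> lt] /=.
apply: leq_ltn_trans lt; apply: subset_leq_card; apply/subsetP => y.
by rewrite !inE => /andP [/(subsetP sub) -> ->].
Qed.

Lemma choose_count (S : {set T}) x : cap <= #|[set y in S | acc y && (r y < r x)]| ->
  cap <= #|[set y in Defs.choose r acc cap S | r y < r x]|.
Proof.
move=> H; rewrite leqNgt; apply/negP => HC.
set C := [set y in Defs.choose r acc cap S | r y < r x] in HC.
set Y := [set y in S | acc y && (r y < r x)] in H.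
have CY : C \subset Y.
  apply/subsetP => y; rewrite !inE => /andP [/and3P [-> -> _] ->] //.
have : 0 < #|Y :\: C|.
  rewrite cardsD (setIidPr CY) subn_gt0; exact: leq_trans HC H.
case/card_gt0P => z0 Hz0.
case: (arg_minnP r Hz0) => z Hz Hmin.
have Hz' : z \in Y :\: C := Hz. move: Hz'; rewrite inE => /andP [zC zY].
have zY' := zY; rewrite inE in zY'; case/andP: zY' => zS /andP [zacc zx].
have : z \in C.
  rewrite inE zx andbT chooseE zS zacc /=.
  apply: leq_ltn_trans HC; apply: subset_leq_card; apply/subsetP => y.
  rewrite inE => /andP [yS /andP [yacc yz]].
  have yY : y \in Y by rewrite inE yS yacc (ltn_trans yz zx).
  case: (boolP (y \in C)) => // yC.
  have Hy : y \in Y :\: C by rewrite inE yC yY.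
  have := Hmin y Hy; rewrite leqNgt yz.
  by [].
by rewrite (negbTE zC).
Qed.

Lemma choose_card (rinj : injective r) (S : {set T}) : #|Defs.choose r acc cap S| <= cap.
Proof.
rewrite leqNgt; apply/negP => Hgt.
have : 0 < #|Defs.choose r acc cap S| by apply: leq_ltn_trans Hgt.
case/card_gt0P => z0 Hz0.
case: (arg_maxnP r Hz0) => z Hz Hmax.
have Hz' : z \in Defs.choose r acc cap S := Hz.
move: (Hz'); rewrite chooseE => /and3P [zS zacc zlt].
have : #|Defs.choose r acc cap S :\ z| <= #|[set y in S | acc y && (r y < r z)]|.
  apply: subset_leq_card; apply/subsetP => y; rewrite in_setD1 => /andP [yz yC].
  have := Hmax y yC; move: yC; rewrite chooseE => /and3P [yS yacc _] Hle.
  have Hle' : r y <= r z := Hle.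
  rewrite inE yS yacc /= ltn_neqAle Hle' andbT.
  by apply/negP => /eqP /rinj /eqP; rewrite (negbTE yz).
move: Hgt; rewrite (cardsD1 z) Hz' add1n ltnS => H1 H2.
have := leq_ltn_trans (leq_trans H1 H2) zlt.
by rewrite ltnn.
Qed.
End Choose.
Section DAtheory.
Variables (A B : finType).
Variables (rA : A -> B -> nat) (accA : A -> pred B) (capA : A -> nat).
Variables (rB : B -> A -> nat) (accB : B -> pred A) (capB : B -> nat).
Hypothesis rA_inj : forall a, injective (rA a).
Hypothesis rB_inj : forall b, injective (rB b).

Local Notation step := (da_step rA accA capA rB accB capB).
Local Notation props := (da_proposals rA accA capA).
Local Notation recv := (da_received rA accA capA).
Local Notation held := (da_held rA accA capA rB accB capB).
Local Notation R0 := (da_rejections rA accA capA rB accB capB).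
Local Notation M := (DA rA accA capA rB accB capB).

Lemma stepE (R : {set A * B}) p : (p \in step R) =
  (p \in R) || ((p.2 \in props R p.1) && (p.1 \notin held R p.2)).
Proof. by rewrite /da_step in_setU inE. Qed.

Lemma step_sub (R : {set A * B}) : R \subset step R.
Proof. exact: subsetUl. Qed.

Lemma iter_grow n : step (iter n step set0) = iter n step set0 \/
                    n <= #|iter n step set0|.
Proof.
elim: n => [|n [IH|IH]] /=; first by right.
  by left; rewrite IH IH.
case: (eqVneq (step (iter n step set0)) (iter n step set0)) => [E|NE].
  by left; rewrite E E.
right; apply: leq_ltn_trans IH _; apply: proper_card.
by rewrite properEneq eq_sym NE step_sub.
Qed.

Lemma R0_fix : step R0 = R0.
Proof.
rewrite /da_rejections; case: (iter_grow (#|A| * #|B|)) => // H.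
set R := iter _ _ _ in H *.
have RT : R = setT.
  apply/eqP; rewrite eqEcard subsetT /= cardsT card_prod; exact: H.
by rewrite RT; apply/eqP; rewrite eqEsubset subsetT step_sub.
Qed.

Lemma props_sub (R : {set A * B}) a : props R a \subset [set b | (a, b) \notin R].
Proof. exact: choose_sub. Qed.

Lemma held_props (R : {set A * B}) a b : a \in held R b -> b \in props R a.
Proof. by move/(subsetP (choose_sub _ _ _ _)); rewrite inE. Qed.

Lemma R0_held a b : (a \in held R0 b) = (b \in props R0 a).
Proof.
apply/idP/idP; first exact: held_props.
move=> Hp; apply/negPn/negP => Hn.
have : (a, b) \in step R0 by rewrite stepE /= Hp Hn orbT.
rewrite R0_fix => HR.
by have := subsetP (props_sub R0 a) b Hp; rewrite inE HR.
Qed.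

Lemma held_mono (R : {set A * B}) b : held R b \subset recv (step R) b.
Proof.
apply/subsetP => a' Ha'.
have Hp := held_props Ha'.
rewrite inE.
have Hns : (a', b) \notin step R.
  rewrite stepE /= Hp Ha' /= orbF.
  by have := subsetP (props_sub R a') b Hp; rewrite inE.
apply: (choose_anti _ _ Hp).
  by apply/subsetP => b'; rewrite !inE; apply: contra => ->.
by rewrite inE.
Qed.

Lemma held_count (R : {set A * B}) b a :
  capB b <= #|[set a' in held R b | rB b a' < rB b a]| ->
  capB b <= #|[set a' in held (step R) b | rB b a' < rB b a]|.
Proof.
move=> H; apply: choose_count; apply: (leq_trans H); apply: subset_leq_card.
apply/subsetP => a' /setIdP [Hh Hlt]; apply/setIdP; split.
  exact: (subsetP (held_mono R b) _ Hh).
by rewrite (choose_acc Hh) Hlt.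
Qed.

Definition Inv (R : {set A * B}) := forall a b, (a, b) \in R -> accB b a ->
  capB b <= #|[set a' in held R b | rB b a' < rB b a]|.

Lemma Inv_step (R : {set A * B}) : Inv R -> Inv (step R).
Proof.
move=> IH a b; rewrite stepE /= => /orP [HR | /andP [Hp Hn]] Hacc.
  exact: held_count (IH _ _ HR Hacc).
apply: held_count; apply: choose_count.
have Hr : a \in recv R b by rewrite inE.
move: Hn; rewrite /da_held chooseE Hr Hacc /= -leqNgt.
exact.
Qed.

Lemma Inv_R0 : Inv R0.
Proof.
rewrite /da_rejections; elim: (#|A| * #|B|) => [|n IH] /=.
  by move=> a b; rewrite inE.
exact: Inv_step.
Qed.

Lemma DA_held a b : ((a, b) \in M) = (a \in held R0 b).
Proof. by rewrite inE. Qed.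

Lemma DA_props a b : ((a, b) \in M) = (b \in props R0 a).
Proof. by rewrite DA_held R0_held. Qed.

Lemma DA_accA a b : (a, b) \in M -> accA a b.
Proof. by rewrite DA_props => /choose_acc. Qed.

Lemma DA_accB a b : (a, b) \in M -> accB b a.
Proof. by rewrite DA_held => /choose_acc. Qed.

Lemma DA_capA a : #|[set b | (a, b) \in M]| <= capA a.
Proof.
rewrite (eq_card (B := props R0 a)); first exact: choose_card.
by move=> b; rewrite inE DA_props.
Qed.

Lemma DA_capB b : #|[set a | (a, b) \in M]| <= capB b.
Proof.
rewrite (eq_card (B := held R0 b)); first exact: choose_card.
by move=> a; rewrite inE DA_held.
Qed.

Lemma DA_betterA a b : (a, b) \in M ->
  #|[set b' | ((a, b') \in M) && (rA a b' < rA a b)]| < capA a.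
Proof.
move=> H; apply: leq_trans (DA_capA a); apply: proper_card.
apply/properP; split.
  by apply/subsetP => b'; rewrite in_set => /andP [? _]; rewrite in_set.
by exists b; [rewrite in_set | rewrite in_set ltnn andbF].
Qed.

Lemma DA_betterB a b : (a, b) \in M ->
  #|[set a' | ((a', b) \in M) && (rB b a' < rB b a)]| < capB b.
Proof.
move=> H; apply: leq_trans (DA_capB b); apply: proper_card.
apply/properP; split.
  by apply/subsetP => a'; rewrite in_set => /andP [? _]; rewrite in_set.
by exists a; [rewrite in_set | rewrite in_set ltnn andbF].
Qed.

Lemma DA_stable a b : (a, b) \notin M -> accA a b -> accB b a ->
  capA a <= #|[set b' | ((a, b') \in M) && (rA a b' < rA a b)]| \/
  capB b <= #|[set a' | ((a', b) \in M) && (rB b a' < rB b a)]|.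
Proof.
move=> HM HaccA HaccB.
case: (boolP ((a, b) \in R0)) => HR.
  right; have := Inv_R0 HR HaccB.
  by rewrite (eq_card (B := [set a' | ((a', b) \in M) && (rB b a' < rB b a)])) // => a'; rewrite !inE.
left.
have Hnp : b \notin props R0 a by rewrite -DA_props.
have Hin : b \in [set b | (a, b) \notin R0] by rewrite inE.
move: Hnp; rewrite /da_proposals chooseE Hin HaccA /= -leqNgt => H.
have := choose_count H.
by rewrite (eq_card (B := [set b' | ((a, b') \in M) && (rA a b' < rA a b)])) // => b'; rewrite in_set [X in _ = X]in_set DA_props.
Qed.
End DAtheory.
From mathcomp Require Import zify.

Section Rank.
Variables (T : finType) (r : T -> nat).
Hypothesis rinj : injective r.
Definition rk x := #|[set y | r y < r x]|.

Lemma rk_lt x y : r y < r x -> rk y < rk x.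
Proof.
move=> H; apply: proper_card; apply/properP; split.
  by apply/subsetP => z; rewrite !inE => Hz; exact: ltn_trans Hz H.
by exists y; rewrite !inE; [exact: H | rewrite ltnn].
Qed.

Lemma rk_ltE x y : (rk y < rk x) = (r y < r x).
Proof.
apply/idP/idP; last exact: rk_lt.
move=> H; case: (ltngtP (r y) (r x)) => [//|Hgt|Heq].
  by have := rk_lt Hgt; rewrite ltnNge (ltnW H).
by move: H; rewrite (rinj Heq) ltnn.
Qed.

Lemma rk_bound x : rk x < #|T|.
Proof.
apply: proper_card; apply/properP; split; first exact: subset_predT.
by exists x => //; rewrite inE ltnn.
Qed.

Lemma rk_inj : injective rk.
Proof.
move=> x y E; case: (ltngtP (r x) (r y)) => [H|H|H]; last exact: rinj.
  by have := rk_lt H; rewrite E ltnn.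
by have := rk_lt H; rewrite E ltnn.
Qed.

Lemma card_rk (P : pred nat) : #|[set x | P (rk x)]| = count P (iota 0 #|T|).
Proof.
rewrite (eq_card (B := [pred x | P (rk x)])); last by move=> x; rewrite !inE.
rewrite card_count.
have -> : count [pred x | P (rk x)] (enum T) = count P (map rk (enum T)).
  by rewrite count_map.
have Hu : uniq (map rk (enum T)) by rewrite (map_inj_uniq rk_inj) enum_uniq.
have Hsub : {subset map rk (enum T) <= iota 0 #|T|}.
  by move=> n /mapP [y _ ->]; rewrite mem_iota add0n leq0n rk_bound.
have Hsz : size (iota 0 #|T|) <= size (map rk (enum T)).
  by rewrite size_iota size_map cardT.
have [_ Heq] := uniq_min_size Hu Hsub Hsz.
by apply/permP; apply: uniq_perm => //; exact: iota_uniq.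
Qed.
End Rank.

Lemma cnt_pref (P : pred nat) c N : c <= N ->
  count (fun i => P i && (i < c)) (iota 0 N) = count P (iota 0 c).
Proof.
move=> H; rewrite -(subnKC H) iotaD count_cat add0n.
rewrite (eq_in_count (a2 := P)); last first.
  by move=> i; rewrite mem_iota add0n leq0n /= => Hi; rewrite Hi andbT.
rewrite (eq_in_count (a1 := fun i => P i && (i < c)) (a2 := pred0)).
  by rewrite count_pred0 addn0.
by move=> i; rewrite mem_iota /= => /andP [Hi _]; rewrite ltnNge Hi andbF.
Qed.

Lemma cnt_div k q N : 0 < k ->
  count (fun i => i %/ k == q) (iota 0 N) = minn k (N - q * k).
Proof.
move=> k0; elim: N => [|N IH]; first by rewrite /= sub0n minn0.
rewrite -addn1 iotaD count_cat IH /= add0n addn0.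
have -> : (N %/ k == q) = (q * k <= N) && (N < q * k + k).
  by rewrite eqn_leq andbC leq_divRL // -[N %/ k <= q]ltnS ltn_divLR // mulSn addnC.
move: (q * k) => Q.
case: (boolP ((Q <= N) && (N < Q + k))) => /= H; lia.
Qed.

Lemma cnt_all N : count (fun _ => true) (iota 0 N) = N.
Proof. by rewrite count_predT size_iota. Qed.

Lemma lt_min k c q : 0 < k -> (minn k (c - q * k) < k) = (c %/ k <= q).
Proof.
move=> k0; rewrite -[c %/ k <= q]ltnS ltn_divLR // mulSn.
move: (q * k) => Q; apply/idP/idP => H; lia.
Qed.

Lemma rk_sub (T : finType) (r : T -> nat) (rinj : injective r) (Q : pred T) x :
  #|[set y | Q y && (rk r y < rk r x)]| <= rk r x.
Proof.
apply: subset_leq_card; apply/subsetP => y; rewrite !inE (rk_ltE rinj).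
by case/andP.
Qed.

Lemma inj_count (T U : finType) (rel : T -> U -> bool) (X : {set T}) (Y : {set U}) :
  (forall x, x \in X -> exists2 y, y \in Y & rel x y) ->
  (forall x1 x2 y, rel x1 y -> rel x2 y -> x1 = x2) -> #|X| <= #|Y|.
Proof.
move=> HX Hinj.
pose f x := [pick y in Y | rel x y].
have fS x : x \in X -> exists2 y, f x = Some y & (y \in Y) && rel x y.
  move=> Hx; rewrite /f; case: pickP => [y Hy|H0]; first by exists y.
  by case: (HX x Hx) => y Hy Hr; have := H0 y; rewrite Hy Hr.
have <- : #|f @: X| = #|X|.
  apply: card_in_imset => x1 x2 H1 H2 E.
  case: (fS _ H1) => y1 E1 /andP [_ R1]; case: (fS _ H2) => y2 E2 /andP [_ R2].
  by move: E; rewrite E1 E2 => [[Ey]]; apply: (Hinj _ _ y1) => //; rewrite Ey.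
rewrite -(card_imset Y Some_inj).
apply: subset_leq_card; apply/subsetP => o /imsetP [x Hx ->].
case: (fS _ Hx) => y -> /andP [Hy _]; exact: imset_f.
Qed.

Lemma card_lt_rk (T : finType) (r : T -> nat) (rinj : injective r) c :
  c <= #|T| -> #|[set x | rk r x < c]| = c.
Proof.
move=> Hc; rewrite (card_rk rinj (fun i => i < c)).
rewrite -[RHS](cnt_all c) -(cnt_pref predT Hc).
by apply: eq_count.
Qed.

Section Main.
Variables (D H : finType) (P : profile D H).
Hypothesis cp : common_prefs P.
Variables (h0 : H) (d0 : D) (l k : nat).
Hypotheses (l0 : 0 < l) (k0 : 0 < k).

Definition rD (d : D) := ph P h0 (Some d).
Definition rH (h : H) := pd P d0 (Some h).
Lemma rD_inj : injective rD.
Proof. by move=> x y /(@ph_inj _ _ P h0) []. Qed.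
Lemma rH_inj : injective rH.
Proof. by move=> x y /(@pd_inj _ _ P d0) []. Qed.
Local Notation rkD := (rk rD).
Local Notation rkH := (rk rH).

Lemma ltD h d1 d2 : (ph P h (Some d1) < ph P h (Some d2)) = (rkD d1 < rkD d2).
Proof. by case: cp => _ E _ _; rewrite (E h h0) (rk_ltE rD_inj). Qed.
Lemma ltH d h1 h2 : (pd P d (Some h1) < pd P d (Some h2)) = (rkH h1 < rkH h2).
Proof. by case: cp => E _ _ _; rewrite (E d d0) (rk_ltE rH_inj). Qed.
Lemma accD_T d h : accD P d h.
Proof. by case: cp => _ _ E _; apply: E. Qed.
Lemma accH_T h d : accH P h d.
Proof. by case: cp => _ _ _ E; apply: E. Qed.

Local Notation nu := (interview_matching P (fun _ => l) (fun _ => k)).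
Local Notation mu := (final_matching P (fun _ => l) (fun _ => k)).

Lemma phS_inj h : injective (fun d => ph P h (Some d)).
Proof. by move=> x y /(@ph_inj _ _ P h) []. Qed.
Lemma pdS_inj d : injective (fun h => pd P d (Some h)).
Proof. by move=> x y /(@pd_inj _ _ P d) []. Qed.

Lemma N1 h : #|[set d | (h, d) \in nu]| <= l.
Proof. exact: (DA_capA _ _ _ _ _ phS_inj). Qed.
Lemma N2 d : #|[set h | (h, d) \in nu]| <= k.
Proof. exact: (DA_capB _ _ _ _ _ pdS_inj). Qed.

Lemma N3 h d : (h, d) \notin nu ->
  l <= #|[set d' | ((h, d') \in nu) && (rkD d' < rkD d)]| \/
  k <= #|[set h' | ((h', d) \in nu) && (rkH h' < rkH h)]|.
Proof.
move=> Hn; have := DA_stable Hn (accH_T h d) (accD_T d h).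
rewrite (eq_card (B := [set d' | ((h, d') \in nu) && (rkD d' < rkD d)])); last first.
  by move=> x; rewrite !in_set ltD.
rewrite (eq_card (B := [set h' | ((h', d) \in nu) && (rkH h' < rkH h)])) //.
by move=> x; rewrite !in_set ltH.
Qed.

Lemma Nb h d : (h, d) \in nu ->
  #|[set d' | ((h, d') \in nu) && (rkD d' < rkD d)]| < l /\
  #|[set h' | ((h', d) \in nu) && (rkH h' < rkH h)]| < k.
Proof.
move=> Hin; split.
  have := DA_betterA phS_inj Hin.
  rewrite (eq_card (B := [set d' | ((h, d') \in nu) && (rkD d' < rkD d)])) //.
  by move=> x; rewrite !in_set ltD.
have := DA_betterB pdS_inj Hin.
rewrite (eq_card (B := [set h' | ((h', d) \in nu) && (rkH h' < rkH h)])) //.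
by move=> x; rewrite !in_set ltH.
Qed.

Lemma M1 d h : (d, h) \in mu -> (h, d) \in nu.
Proof. by move/DA_accA => /andP []. Qed.

Lemma le1_eq (T : finType) (A : {set T}) x y : #|A| <= 1 -> x \in A -> y \in A -> x = y.
Proof.
move=> HA Hx Hy; apply/eqP; apply/negP => /negP Hne.
have : #|[set x; y]| <= #|A|.
  by apply: subset_leq_card; apply/subsetP => z; rewrite !inE => /orP [] /eqP ->.
by rewrite cards2 Hne => /(leq_trans)/(_ HA).
Qed.

Lemma M2 d h h' : (d, h) \in mu -> (d, h') \in mu -> h = h'.
Proof.
move=> H1 H2.
have HA : #|[set x | (d, x) \in mu]| <= 1 := DA_capA _ _ _ _ _ pdS_inj d.
by apply: (le1_eq HA); rewrite inE.
Qed.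

Lemma M3 d d' h : (d, h) \in mu -> (d', h) \in mu -> d = d'.
Proof.
move=> H1 H2.
have HA : #|[set x | (x, h) \in mu]| <= 1 := DA_capB _ _ _ _ _ phS_inj h.
by apply: (le1_eq HA); rewrite inE.
Qed.

Lemma M4 h d : (h, d) \in nu -> (d, h) \notin mu ->
  (exists2 h', (d, h') \in mu & rkH h' < rkH h) \/
  (exists2 d', (d', h) \in mu & rkD d' < rkD d).
Proof.
move=> Hn Hm.
have := DA_stable Hm (_ : ((h, d) \in nu) && accD P d h) (_ : ((h, d) \in nu) && accH P h d).
rewrite Hn accD_T accH_T => /(_ isT isT) [] /card_gt0P [x]; rewrite inE => /andP [Hx Hlt].
  by left; exists x => //; move: Hlt; rewrite ltH.
by right; exists x => //; move: Hlt; rewrite ltD.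
Qed.


Definition bPD d h := if partnerD mu d is Some h' then rkH h < rkH h' else true.
Definition bPH h d := if partnerH mu h is Some d' then rkD d < rkD d' else true.

Lemma stable_bP : stable P mu <-> forall d h, ~ (bPD d h /\ bPH h d).
Proof.
have E1 d h : (pd P d (Some h) < pd P d (partnerD mu d)) = bPD d h.
  by rewrite /bPD; case: (partnerD mu d) => [h'|]; [exact: ltH | exact: accD_T].
have E2 d h : (ph P h (Some d) < ph P h (partnerH mu h)) = bPH h d.
  by rewrite /bPH; case: (partnerH mu h) => [d'|]; [exact: ltD | exact: accH_T].
by split=> Hs d h; have := Hs d h; rewrite E1 E2.
Qed.

Lemma pD_Some d h : (d, h) \in mu -> partnerD mu d = Some h.
Proof.
move=> Hm; rewrite /partnerD; case: pickP => [h' Hh'|H0]; first by rewrite (M2 Hh' Hm).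
by have := H0 h; rewrite Hm.
Qed.
Lemma pH_Some d h : (d, h) \in mu -> partnerH mu h = Some d.
Proof.
move=> Hm; rewrite /partnerH; case: pickP => [d' Hd'|H0]; first by rewrite (M3 Hd' Hm).
by have := H0 d; rewrite Hm.
Qed.
Lemma pD_mem d h : partnerD mu d = Some h -> (d, h) \in mu.
Proof. by rewrite /partnerD; case: pickP => // h' Hh' [<-]. Qed.
Lemma pH_mem d h : partnerH mu h = Some d -> (d, h) \in mu.
Proof. by rewrite /partnerH; case: pickP => // d' Hd' [<-]. Qed.

Lemma block_nu d h : bPD d h -> bPH h d -> (h, d) \notin nu.
Proof.
move=> bd bh; apply/negP => Hn.
have Hm : (d, h) \notin mu.
  by apply/negP => Hm; move: bd; rewrite /bPD (pD_Some Hm) ltnn.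
case: (M4 Hn Hm) => [[h' Hm' Hlt] | [d' Hm' Hlt]].
  by move: bd; rewrite /bPD (pD_Some Hm') ltnNge (ltnW Hlt).
by move: bh; rewrite /bPH (pH_Some Hm') ltnNge (ltnW Hlt).
Qed.

Lemma caseA d h : bPD d h -> bPH h d ->
  #|[set d' | ((h, d') \in nu) && (rkD d' < rkD d)]| <= rkH h.
Proof.
move=> bd bh.
apply: (@leq_trans #|[set h'' | rkH h'' < rkH h]|); last first.
  by rewrite (eq_card (B := [set y | rH y < rH h])) // => x; rewrite !inE (rk_ltE rH_inj).
apply: (inj_count (rel := fun x y => (x, y) \in mu)); last first.
  by move=> x1 x2 y H1 H2; exact: M3 H1 H2.
move=> d'; rewrite in_set => /andP [Hn Hlt].
have Hm : (d', h) \notin mu.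
  by apply/negP => Hm; move: bh; rewrite /bPH (pH_Some Hm) ltnNge (ltnW Hlt).
case: (M4 Hn Hm) => [[h' Hm' Hlt'] | [d'' Hm' Hlt']].
  by exists h' => //; rewrite inE.
move: bh; rewrite /bPH (pH_Some Hm') => H1.
by have := ltn_trans H1 (ltn_trans Hlt' Hlt); rewrite ltnn.
Qed.

Lemma caseB d h : bPD d h -> bPH h d ->
  #|[set h' | ((h', d) \in nu) && (rkH h' < rkH h)]| <= rkD d.
Proof.
move=> bd bh.
apply: (@leq_trans #|[set d'' | rkD d'' < rkD d]|); last first.
  by rewrite (eq_card (B := [set y | rD y < rD d])) // => x; rewrite !inE (rk_ltE rD_inj).
apply: (inj_count (rel := fun y x => (x, y) \in mu)); last first.
  by move=> y1 y2 x H1 H2; exact: M2 H1 H2.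
move=> h'; rewrite in_set => /andP [Hn Hlt].
have Hm : (d, h') \notin mu.
  by apply/negP => Hm; move: bd; rewrite /bPD (pD_Some Hm) ltnNge (ltnW Hlt).
case: (M4 Hn Hm) => [[h'' Hm' Hlt'] | [d'' Hm' Hlt']].
  move: bd; rewrite /bPD (pD_Some Hm') => H1.
  by have := ltn_trans H1 (ltn_trans Hlt' Hlt); rewrite ltnn.
by exists d'' => //; rewrite inE.
Qed.

Lemma adequate_min : minn #|D| #|H| <= l -> minn #|D| #|H| <= k -> stable P mu.
Proof.
move=> Hl Hk; apply/stable_bP => d h [bd bh].
have Hn := block_nu bd bh.
have rDb := rk_bound rD d; have rHb := rk_bound rH h.
case: (N3 Hn) => C.
  have C1 := caseA bd bh.
  have C2 : #|[set d' | ((h, d') \in nu) && (rkD d' < rkD d)]| <= rkD d := rk_sub rD_inj _ d.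
  lia.
have C1 := caseB bd bh.
have C2 : #|[set h' | ((h', d) \in nu) && (rkH h' < rkH h)]| <= rkH h := rk_sub rH_inj _ h.
lia.
Qed.

Section Eq.
Hypothesis Hlk : l = k.

Lemma local_char h d : ((h, d) \in nu) =
  (#|[set d' | ((h, d') \in nu) && (rkD d' < rkD d)]| < k) &&
  (#|[set h' | ((h', d) \in nu) && (rkH h' < rkH h)]| < k).
Proof.
apply/idP/idP.
  move=> Hin; case: (Nb Hin) => A B; rewrite B andbT.
  exact: (leq_trans A (eq_leq Hlk)).
case/andP => A B; apply/negPn/negP => Hn; case: (N3 Hn) => C.
  by move: A; rewrite ltnNge (leq_trans (eq_leq (esym Hlk)) C).
by move: B; rewrite ltnNge C.
Qed.

Lemma blocks_step h d :
  (forall h' d', rkH h' + rkD d' < rkH h + rkD d ->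
     ((h', d') \in nu) = (rkH h' %/ k == rkD d' %/ k)) ->
  ((h, d) \in nu) = (rkH h %/ k == rkD d %/ k).
Proof.
move=> IH; rewrite local_char.
have EA : #|[set d' | ((h, d') \in nu) && (rkD d' < rkD d)]| =
          minn k (rkD d - (rkH h %/ k) * k).
  rewrite (eq_card (B := [set d' | (fun i => (i %/ k == rkH h %/ k) && (i < rkD d)) (rkD d')])); last first.
    move=> x; rewrite in_set [X in _ = X]in_set /=.
    case Hlt: (rkD x < rkD d); rewrite ?andbF ?andbT //.
    by rewrite IH ?ltn_add2l // eq_sym.
  rewrite (card_rk rD_inj (fun i => (i %/ k == rkH h %/ k) && (i < rkD d))).
  rewrite (cnt_pref (fun i => i %/ k == rkH h %/ k)); last exact: ltnW (rk_bound rD d).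
  by rewrite cnt_div.
have EB : #|[set h' | ((h', d) \in nu) && (rkH h' < rkH h)]| =
          minn k (rkH h - (rkD d %/ k) * k).
  rewrite (eq_card (B := [set h' | (fun i => (i %/ k == rkD d %/ k) && (i < rkH h)) (rkH h')])); last first.
    move=> x; rewrite in_set [X in _ = X]in_set /=.
    case Hlt: (rkH x < rkH h); rewrite ?andbF ?andbT //.
    by rewrite IH // ltn_add2r.
  rewrite (card_rk rH_inj (fun i => (i %/ k == rkD d %/ k) && (i < rkH h))).
  rewrite (cnt_pref (fun i => i %/ k == rkD d %/ k)); last exact: ltnW (rk_bound rH h).
  by rewrite cnt_div.
by rewrite EA EB !lt_min // eqn_leq andbC.
Qed.

Lemma blocks h d : ((h, d) \in nu) = (rkH h %/ k == rkD d %/ k).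
Proof.
suff K : forall s h d, rkH h + rkD d <= s ->
    ((h, d) \in nu) = (rkH h %/ k == rkD d %/ k).
  exact: (K _ h d (leqnn _)).
elim=> [|s IH] h1 d1 Hs; apply: blocks_step => h' d' Hlt.
  by move: Hs; rewrite leqn0 => /eqP E; rewrite E in Hlt.
by apply: IH; rewrite -ltnS; apply: leq_trans Hlt Hs.
Qed.

Lemma adequate_eq : stable P mu.
Proof.
apply/stable_bP => d h [bd bh].
have Hn := block_nu bd bh; rewrite blocks in Hn.
have rDb := rk_bound rD d; have rHb := rk_bound rH h.
case: (ltngtP (rkH h %/ k) (rkD d %/ k)) => Hac; last by rewrite Hac eqxx in Hn.
-
  have hun : forall d'', (d'', h) \notin mu.
    move=> d''; apply/negP => Hm; move: bh; rewrite /bPH (pH_Some Hm) => Hlt.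
    have := M1 Hm; rewrite blocks => /eqP Eq.
    have : rkD d'' %/ k < rkD d %/ k by rewrite -Eq.
    by rewrite ltnNge leq_div2r // ltnW.
  have Hq1 : (rkH h %/ k).+1 * k <= rkD d by rewrite -leq_divRL.
  have cardDq : #|[set x | rkD x %/ k == rkH h %/ k]| = k.
    rewrite (card_rk rD_inj (fun i => i %/ k == rkH h %/ k)) cnt_div //.
    move: Hq1; rewrite mulSn; move: (rkH h %/ k * k) => Q Hq1; lia.
  have cardHq : #|[set x | rkH x %/ k == rkH h %/ k]| <= k.
    by rewrite (card_rk rH_inj (fun i => i %/ k == rkH h %/ k)) cnt_div // geq_minl.
  have [d'' Hq Hf] : exists2 d'', rkD d'' %/ k == rkH h %/ k & forall h'', (d'', h'') \notin mu.
    case: (boolP [exists d'', (rkD d'' %/ k == rkH h %/ k) && [forall h'', (d'', h'') \notin mu]]).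
      by case/existsP => d'' /andP [Hq /forallP Hf]; exists d''.
    move=> Hne; exfalso.
    have : #|[set x | rkD x %/ k == rkH h %/ k]| <= #|[set x | rkH x %/ k == rkH h %/ k] :\ h|.
      apply: (inj_count (rel := fun x y => (x, y) \in mu)); last first.
        by move=> x1 x2 y H1 H2; exact: M3 H1 H2.
      move=> x; rewrite inE => Hx.
      move: Hne; rewrite negb_exists => /forallP /(_ x); rewrite Hx /= negb_forall.
      case/existsP => y; rewrite negbK => Hm; exists y => //.
      rewrite !inE; apply/andP; split.
        by apply/negP => /eqP E; move: (hun x); rewrite -E Hm.
      by have := M1 Hm; rewrite blocks => /eqP ->.
    have E := cardsD1 h [set x | rkH x %/ k == rkH h %/ k].
    rewrite inE eqxx in E.
    rewrite cardDq; lia.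
  have Hn' : (h, d'') \in nu by rewrite blocks eq_sym.
  case: (M4 Hn' (hun d'')) => [[h' Hm _] | [d' Hm _]].
    by move: (Hf h'); rewrite Hm.
  by move: (hun d'); rewrite Hm.
-
  have dun : forall h'', (d, h'') \notin mu.
    move=> h''; apply/negP => Hm; move: bd; rewrite /bPD (pD_Some Hm) => Hlt.
    have := M1 Hm; rewrite blocks => /eqP Eq.
    have : rkH h'' %/ k < rkH h %/ k by rewrite Eq.
    by rewrite ltnNge leq_div2r // ltnW.
  have Hq1 : (rkD d %/ k).+1 * k <= rkH h by rewrite -leq_divRL.
  have cardHq : #|[set x | rkH x %/ k == rkD d %/ k]| = k.
    rewrite (card_rk rH_inj (fun i => i %/ k == rkD d %/ k)) cnt_div //.
    move: Hq1; rewrite mulSn; move: (rkD d %/ k * k) => Q Hq1; lia.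
  have cardDq : #|[set x | rkD x %/ k == rkD d %/ k]| <= k.
    by rewrite (card_rk rD_inj (fun i => i %/ k == rkD d %/ k)) cnt_div // geq_minl.
  have [h'' Hq Hf] : exists2 h'', rkH h'' %/ k == rkD d %/ k & forall d'', (d'', h'') \notin mu.
    case: (boolP [exists h'', (rkH h'' %/ k == rkD d %/ k) && [forall d'', (d'', h'') \notin mu]]).
      by case/existsP => h'' /andP [Hq /forallP Hf]; exists h''.
    move=> Hne; exfalso.
    have : #|[set x | rkH x %/ k == rkD d %/ k]| <= #|[set x | rkD x %/ k == rkD d %/ k] :\ d|.
      apply: (inj_count (rel := fun y x => (x, y) \in mu)); last first.
        by move=> y1 y2 x H1 H2; exact: M2 H1 H2.
      move=> y; rewrite inE => Hy.
      move: Hne; rewrite negb_exists => /forallP /(_ y); rewrite Hy /= negb_forall.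
      case/existsP => x; rewrite negbK => Hm; exists x => //.
      rewrite !inE; apply/andP; split.
        by apply/negP => /eqP E; move: (dun y); rewrite -E Hm.
      by have := M1 Hm; rewrite blocks => /eqP <-.
    have E := cardsD1 d [set x | rkD x %/ k == rkD d %/ k].
    rewrite inE eqxx in E.
    rewrite cardHq; lia.
  have Hn' : (h'', d) \in nu by rewrite blocks.
  case: (M4 Hn' (Hf d)) => [[h' Hm _] | [d' Hm _]].
    by move: (dun h'); rewrite Hm.
  by move: (Hf d'); rewrite Hm.
Qed.

End Eq.

Lemma exists_out (T : finType) (r : T -> nat) (rinj : injective r) c :
  c < #|T| -> exists x, ~~ (rk r x < c).
Proof.
move=> Hc; have E := cardsC [set x | rk r x < c].
rewrite (card_lt_rk rinj (ltnW Hc)) in E.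
have : 0 < #|~: [set x | rk r x < c]| by lia.
by case/card_gt0P => x; rewrite !inE => Hx; exists x.
Qed.

Lemma inadequate_lk : l < k -> l < #|D| -> l < #|H| -> ~ stable P mu.
Proof.
move=> Hlt HlD HlH /stable_bP Hs.
pose DL := [set x | rkD x < l]. pose HL := [set y | rkH y < l.+1].
have cDL : #|DL| = l := card_lt_rk rD_inj (ltnW HlD).
have cHL : #|HL| = l.+1 := card_lt_rk rH_inj HlH.
have all_in : forall h d, h \in HL -> d \in DL -> (h, d) \in nu.
  move=> h d Hh Hd; rewrite inE in Hh; rewrite inE in Hd; apply/negPn/negP => Hn.
  case: (N3 Hn) => C.
    have C2 : #|[set d' | ((h, d') \in nu) && (rkD d' < rkD d)]| <= rkD d := rk_sub rD_inj _ d.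
    lia.
  have C2 : #|[set h' | ((h', d) \in nu) && (rkH h' < rkH h)]| <= rkH h := rk_sub rH_inj _ h.
  lia.
have only : forall h d, h \in HL -> (h, d) \in nu -> d \in DL.
  move=> h d Hh Hn; apply/negPn/negP => Hd.
  have : #|d |: DL| <= #|[set x | (h, x) \in nu]|.
    apply: subset_leq_card; apply/subsetP => x; rewrite in_setU1 => /orP [/eqP -> | Hx].
      by rewrite in_set.
    by rewrite in_set; apply: all_in.
  rewrite cardsU1 Hd cDL add1n => H1; have := leq_trans H1 (N1 h).
  by rewrite ltnn.
have [hj Hj Hf] : exists2 hj, hj \in HL & forall d, (d, hj) \notin mu.
  case: (boolP [exists hj, (hj \in HL) && [forall d, (d, hj) \notin mu]]).
    by case/existsP => hj /andP [Hj /forallP Hf]; exists hj.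
  move=> Hne; exfalso.
  have : #|HL| <= #|DL|.
    apply: (inj_count (rel := fun y x => (x, y) \in mu)); last first.
      by move=> y1 y2 x H1 H2; exact: M2 H1 H2.
    move=> y Hy.
    move: Hne; rewrite negb_exists => /forallP /(_ y); rewrite Hy /= negb_forall.
    case/existsP => x; rewrite negbK => Hm; exists x => //.
    exact: only Hy (M1 Hm).
  by rewrite cHL cDL ltnn.
have [d Hd] := exists_out rD_inj HlD.
have HdDL : d \notin DL by rewrite inE.
apply: (Hs d hj); split.
  rewrite /bPD; case E: (partnerD mu d) => [h''|] //.
  have Hn := M1 (pD_mem E).
  have Hh'' : h'' \notin HL.
    by apply/negP => Hh; move: HdDL; rewrite (only _ _ Hh Hn).
  move: Hj Hh''; rewrite !inE; lia.
rewrite /bPH; case E: (partnerH mu hj) => [d''|] //.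
by move: (Hf d''); rewrite (pH_mem E).
Qed.

Lemma inadequate_kl : k < l -> k < #|D| -> k < #|H| -> ~ stable P mu.
Proof.
move=> Hlt HkD HkH /stable_bP Hs.
pose HK := [set y | rkH y < k]. pose DK := [set x | rkD x < k.+1].
have cHK : #|HK| = k := card_lt_rk rH_inj (ltnW HkH).
have cDK : #|DK| = k.+1 := card_lt_rk rD_inj HkD.
have all_in : forall h d, h \in HK -> d \in DK -> (h, d) \in nu.
  move=> h d Hh Hd; rewrite inE in Hh; rewrite inE in Hd; apply/negPn/negP => Hn.
  case: (N3 Hn) => C.
    have C2 : #|[set d' | ((h, d') \in nu) && (rkD d' < rkD d)]| <= rkD d := rk_sub rD_inj _ d.
    lia.
  have C2 : #|[set h' | ((h', d) \in nu) && (rkH h' < rkH h)]| <= rkH h := rk_sub rH_inj _ h.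
  lia.
have only : forall h d, d \in DK -> (h, d) \in nu -> h \in HK.
  move=> h d Hd Hn; apply/negPn/negP => Hh.
  have : #|h |: HK| <= #|[set y | (y, d) \in nu]|.
    apply: subset_leq_card; apply/subsetP => y; rewrite in_setU1 => /orP [/eqP -> | Hy].
      by rewrite in_set.
    by rewrite in_set; apply: all_in.
  rewrite cardsU1 Hh cHK add1n => H1; have := leq_trans H1 (N2 d).
  by rewrite ltnn.
have [dj Hj Hf] : exists2 dj, dj \in DK & forall h, (dj, h) \notin mu.
  case: (boolP [exists dj, (dj \in DK) && [forall h, (dj, h) \notin mu]]).
    by case/existsP => dj /andP [Hj /forallP Hf]; exists dj.
  move=> Hne; exfalso.
  have : #|DK| <= #|HK|.
    apply: (inj_count (rel := fun x y => (x, y) \in mu)); last first.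
      by move=> x1 x2 y H1 H2; exact: M3 H1 H2.
    move=> x Hx.
    move: Hne; rewrite negb_exists => /forallP /(_ x); rewrite Hx /= negb_forall.
    case/existsP => y; rewrite negbK => Hm; exists y => //.
    exact: only Hx (M1 Hm).
  by rewrite cHK cDK ltnn.
have [h Hh] := exists_out rH_inj HkH.
have HhHK : h \notin HK by rewrite inE.
apply: (Hs dj h); split.
  rewrite /bPD; case E: (partnerD mu dj) => [h''|] //.
  by move: (Hf h''); rewrite (pD_mem E).
rewrite /bPH; case E: (partnerH mu h) => [d''|] //.
have Hn := M1 (pH_mem E).
have Hd'' : d'' \notin DK.
  by apply/negP => Hd; move: HhHK; rewrite (only _ _ Hd Hn).
move: Hj Hd''; rewrite !inE; lia.
Qed.

End Main.

Unset Implicit Arguments.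
Theorem proposition2 (D H : finType) (P : profile D H) (l k : nat) :
  2 <= #|D| -> 2 <= #|H| -> common_prefs P -> 0 < l -> 0 < k ->
  (homogeneous_adequate P l k <->
   (l = k \/ (minn #|D| #|H| <= l /\ minn #|D| #|H| <= k))).
Proof.
move=> HD HH cp l0 k0.
have [h0 _] : exists h0 : H, h0 \in H by apply/card_gt0P; apply: leq_trans HH.
have [d0 _] : exists d0 : D, d0 \in D by apply/card_gt0P; apply: leq_trans HD.
rewrite /homogeneous_adequate /adequate; split.
  move=> Hs.
  case: (boolP ((minn #|D| #|H| <= l) && (minn #|D| #|H| <= k))).
    by case/andP => A B; right.
  move=> Hn; left; apply/eqP; apply/negP => /eqP ne.
  have : ((l < k) && (l < #|D|) && (l < #|H|)) || ((k < l) && (k < #|D|) && (k < #|H|)).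
    move: Hn; rewrite negb_and -!ltnNge => Hn.
    apply/orP; case/orP: Hn => Hn; lia.
  case/orP => /andP [/andP [A B] C].
    exact: (inadequate_lk cp h0 d0 l0 k0 A B C Hs).
  exact: (inadequate_kl cp h0 d0 l0 k0 A B C Hs).
case=> [E | [A B]].
  by subst k; apply: (adequate_eq cp h0 d0 l0 l0 (erefl l)).
exact: (adequate_min cp h0 d0 l0 k0 A B).
Qed.
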